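(* Let $R_e\approx1.4877$ be the unique positive root of $\frac{10}{7(R+1)}-\frac{R^2\sqrt{R}}{R^2+R+1}=0$. Let $\tau_k>0$ be time-step sizes with ratios $r_k=\tau_k/\tau_{k-1}$ satisfying $0<r_k<R_e$ for all $k\ge2$. Then for every $n\ge3$ and all real numbers $\xi_3,\dots,\xi_n$, $$2\sum_{k=3}^n\xi_k\sum_{j=3}^k\tau_kd^{(k)}_{k-j}\xi_j\ge\frac{1}{50}\sum_{k=3}^n\tau_k\xi_k^2 .$$
   Context: For $x,y\ge0$ let $d_0(x,y)=\frac{1+2x}{1+x}+\frac{xy}{1+y+xy}$, $d_1(x,y)=-\frac{x}{1+x}-\frac{xy}{1+y+xy}-\frac{xy^2}{1+y+xy}\frac{1+x}{1+y}$, $d_2(x,y)=\frac{xy^2}{1+y+xy}\frac{1+x}{1+y}$. The BDF3 kernels are $d^{(k)}_j=d_j(r_k,r_{k-1})$ for $j=0,1,2$ and $d^{(k)}_j=0$ for $j\ge3$. *)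

(* Defs.v *)
From HB Require Import structures.
From mathcomp Require Import all_boot all_order all_algebra.
From mathcomp Require Import reals.
Set Implicit Arguments. Unset Strict Implicit. Unset Printing Implicit Defensive.
Import Order.TTheory GRing.Theory Num.Theory.
Local Open Scope ring_scope.

Section BDF3.
Variable R : realType.

Definition Re_fun (x : R) : R :=
  10 / (7 * (x + 1)) - x ^+ 2 * Num.sqrt x / (x ^+ 2 + x + 1).

Definition d0 (x y : R) : R := (1 + 2 * x) / (1 + x) + x * y / (1 + y + x * y).
Definition d1 (x y : R) : R :=
  - (x / (1 + x)) - x * y / (1 + y + x * y)
  - x * y ^+ 2 / (1 + y + x * y) * ((1 + x) / (1 + y)).
Definition d2 (x y : R) : R := x * y ^+ 2 / (1 + y + x * y) * ((1 + x) / (1 + y)).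

Definition dj (j : nat) (x y : R) : R :=
  match j with 0 => d0 x y | 1 => d1 x y | 2 => d2 x y | _ => 0 end.

Definition step_ratio (tau : nat -> R) (k : nat) : R := tau k / tau k.-1.

Definition bdf3_kernel (tau : nat -> R) (k j : nat) : R :=
  dj j (step_ratio tau k) (step_ratio tau k.-1).

End BDF3.

(* Main.v *)
Require Import Defs.
From HB Require Import structures.
From mathcomp Require Import all_boot all_order all_algebra.
From mathcomp Require Import reals ring lra zify.
Import Order.TTheory GRing.Theory Num.Theory.
Local Open Scope ring_scope.

Definition bt {R : realType} (c a b d e : R) (i j k l : nat) : R :=
  c * (a ^+ i * b ^+ j * d ^+ k * e ^+ l).

Lemma bt_ge0 {R : realType} (c a b d e : R) i j k l :
  0 <= c -> 0 <= a -> 0 <= b -> 0 <= d -> 0 <= e -> 0 <= bt c a b d e i j k l.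
Proof.
move=> hc ha hb hd he; rewrite /bt; apply: mulr_ge0 => //.
by rewrite !mulr_ge0 // exprn_ge0.
Qed.

Definition Hpol {R : realType} (x y : R) : R :=
  (4 * 1000 + 851) * (1) + (19 * 1000 + 404) * (y ^+ 1) + (29 * 1000 + 106) * (y ^+ 2) + (19 * 1000 + 404) * (y ^+ 3) + (4 * 1000 + 851) * (y ^+ 4) + (85 * 1000 + 602) * (x ^+ 1) + (444 * 1000 + 510) * (x ^+ 1 * y ^+ 1) + (819 * 1000 + 918) * (x ^+ 1 * y ^+ 2) + (648 * 1000 + 714) * (x ^+ 1 * y ^+ 3) + (187 * 1000 + 704) * (x ^+ 1 * y ^+ 4) + (72 * 1000 + 251) * (x ^+ 2) + (653 * 1000 + 8) * (x ^+ 2 * y ^+ 1) + ((1 * 1000 + 613) * 1000 + 169) * (x ^+ 2 * y ^+ 2) + ((1 * 1000 + 556) * 1000 + 318) * (x ^+ 2 * y ^+ 3) + (523 * 1000 + 906) * (x ^+ 2 * y ^+ 4) + (- (48 * 1000 + 500)) * (x ^+ 3) + (- (21 * 1000 + 98)) * (x ^+ 3 * y ^+ 1) + (453 * 1000 + 308) * (x ^+ 3 * y ^+ 2) + (782 * 1000 + 310) * (x ^+ 3 * y ^+ 3) + (262 * 1000 + 404) * (x ^+ 3 * y ^+ 4) + (- (169 * 1000 + 0)) * (x ^+ 4 * y ^+ 1) + (- (483 * 1000 + 149)) * (x ^+ 4 * y ^+ 2) + (- (424 * 1000 + 98)) * (x ^+ 4 * y ^+ 3) + (- (445 * 1000 +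 949)) * (x ^+ 4 * y ^+ 4) + (- (154 * 1000 + 100)) * (x ^+ 5 * y ^+ 2) + (- (257 * 1000 + 0)) * (x ^+ 5 * y ^+ 3) + (- (506 * 1000 + 900)) * (x ^+ 5 * y ^+ 4) + (22 * 1000 + 400) * (x ^+ 6 * y ^+ 3) + (- (113 * 1000 + 600)) * (x ^+ 6 * y ^+ 4) + (66 * 1000 + 0) * (x ^+ 7 * y ^+ 4) + (40 * 1000 + 0) * (x ^+ 8 * y ^+ 4).

Lemma Hbern (R : realType) (x y : R) : ((15 * 1000 + 116) * 1000 + 544) * Hpol x y =
  bt (137 * 1000 + 984) (2*x) (3-2*x) (2*y) (3-2*y) 0 8 0 4 + bt ((1 * 1000 + 379) * 1000 + 840) (2*x) (3-2*x) (2*y) (3-2*y) 0 8 1 3 + bt ((5 * 1000 + 174) * 1000 + 400) (2*x) (3-2*x) (2*y) (3-2*y) 0 8 2 2 + bt ((8 * 1000 + 624) * 1000 + 0) (2*x) (3-2*x) (2*y) (3-2*y) 0 8 3 1 + bt ((5 * 1000 + 390) * 1000 + 0) (2*x) (3-2*x) (2*y) (3-2*y) 0 8 4 0 + bt ((4 * 1000 + 756) * 1000 + 224) (2*x) (3-2*x) (2*y) (3-2*y) 1 7 0 4 + bt ((54 * 1000 + 96) * 1000 + 768) (2*x) (3-2*x) (2*y) (3-2*y) 1 7 1 3 + bt ((227 * 1000 + 367) * 1000 + 360) (2*x) (3-2*x) (2*y) (3-2*y) 1 7 2 2 + bt ((419 * 1000 + 786) * 1000 + 400) (2*x) (3-2*x)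 (2*y) (3-2*y) 1 7 3 1 + bt ((287 * 1000 + 892) * 1000 + 0) (2*x) (3-2*x) (2*y) (3-2*y) 1 7 4 0 + bt ((34 * 1000 + 54) * 1000 + 80) (2*x) (3-2*x) (2*y) (3-2*y) 2 6 0 4 + bt ((421 * 1000 + 226) * 1000 + 880) (2*x) (3-2*x) (2*y) (3-2*y) 2 6 1 3 + bt (((1 * 1000 + 894) * 1000 + 795) * 1000 + 344) (2*x) (3-2*x) (2*y) (3-2*y) 2 6 2 2 + bt (((3 * 1000 + 704) * 1000 + 352) * 1000 + 720) (2*x) (3-2*x) (2*y) (3-2*y) 2 6 3 1 + bt (((2 * 1000 + 669) * 1000 + 843) * 1000 + 400) (2*x) (3-2*x) (2*y) (3-2*y) 2 6 4 0 + bt ((107 * 1000 + 514) * 1000 + 880) (2*x) (3-2*x) (2*y) (3-2*y) 3 5 0 4 + bt (((1 * 1000 + 446) * 1000 + 938) * 1000 + 80) (2*x) (3-2*x) (2*y) (3-2*y) 3 5 1 3 + bt (((6 * 1000 + 944) * 1000 + 688) * 1000 + 96) (2*x) (3-2*x) (2*y) (3-2*y) 3 5 2 2 + bt (((14 * 1000 + 315) * 1000 + 105) * 1000 + 80) (2*x) (3-2*x) (2*y) (3-2*y) 3 5 3 1 + bt (((10 * 1000 + 746) * 1000 + 385) * 1000 + 600) (2*x) (3-2*x) (2*y) (3-2*y) 3 5 4 0 + bt ((183 * 1000 + 572) * 1000 + 160) (2*x) (3-2*x) (2*y) (3-2*y) 4 4 0 4 + bt (((2 * 1000 + 676) * 1000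 + 581) * 1000 + 280) (2*x) (3-2*x) (2*y) (3-2*y) 4 4 1 3 + bt (((13 * 1000 + 631) * 1000 + 107) * 1000 + 644) (2*x) (3-2*x) (2*y) (3-2*y) 4 4 2 2 + bt (((29 * 1000 + 470) * 1000 + 374) * 1000 + 420) (2*x) (3-2*x) (2*y) (3-2*y) 4 4 3 1 + bt (((22 * 1000 + 658) * 1000 + 944) * 1000 + 275) (2*x) (3-2*x) (2*y) (3-2*y) 4 4 4 0 + bt ((181 * 1000 + 480) * 1000 + 704) (2*x) (3-2*x) (2*y) (3-2*y) 5 3 0 4 + bt (((2 * 1000 + 845) * 1000 + 366) * 1000 + 80) (2*x) (3-2*x) (2*y) (3-2*y) 5 3 1 3 + bt (((15 * 1000 + 230) * 1000 + 472) * 1000 + 696) (2*x) (3-2*x) (2*y) (3-2*y) 5 3 2 2 + bt (((34 * 1000 + 270) * 1000 + 783) * 1000 + 80) (2*x) (3-2*x) (2*y) (3-2*y) 5 3 3 1 + bt (((25 * 1000 + 977) * 1000 + 868) * 1000 + 350) (2*x) (3-2*x) (2*y) (3-2*y) 5 3 4 0 + bt ((103 * 1000 + 363) * 1000 + 904) (2*x) (3-2*x) (2*y) (3-2*y) 6 2 0 4 + bt (((1 * 1000 + 724) * 1000 + 984) * 1000 + 768) (2*x) (3-2*x) (2*y) (3-2*y) 6 2 1 3 + bt (((9 * 1000 + 559) * 1000 + 554) * 1000 + 384) (2*x) (3-2*x) (2*y) (3-2*y) 6 2 2 2 + bt (((22 * 1000 + 174) * 1000 + 399) * 1000 + 520)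 (2*x) (3-2*x) (2*y) (3-2*y) 6 2 3 1 + bt (((15 * 1000 + 129) * 1000 + 118) * 1000 + 400) (2*x) (3-2*x) (2*y) (3-2*y) 6 2 4 0 + bt ((31 * 1000 + 134) * 1000 + 720) (2*x) (3-2*x) (2*y) (3-2*y) 7 1 0 4 + bt ((545 * 1000 + 228) * 1000 + 640) (2*x) (3-2*x) (2*y) (3-2*y) 7 1 1 3 + bt (((3 * 1000 + 47) * 1000 + 276) * 1000 + 520) (2*x) (3-2*x) (2*y) (3-2*y) 7 1 2 2 + bt (((7 * 1000 + 199) * 1000 + 25) * 1000 + 600) (2*x) (3-2*x) (2*y) (3-2*y) 7 1 3 1 + bt (((3 * 1000 + 437) * 1000 + 802) * 1000 + 0) (2*x) (3-2*x) (2*y) (3-2*y) 7 1 4 0 + bt ((3 * 1000 + 758) * 1000 + 400) (2*x) (3-2*x) (2*y) (3-2*y) 8 0 0 4 + bt ((67 * 1000 + 456) * 1000 + 800) (2*x) (3-2*x) (2*y) (3-2*y) 8 0 1 3 + bt ((359 * 1000 + 172) * 1000 + 900) (2*x) (3-2*x) (2*y) (3-2*y) 8 0 2 2 + bt ((846 * 1000 + 949) * 1000 + 500) (2*x) (3-2*x) (2*y) (3-2*y) 8 0 3 1 + bt ((134 * 1000 + 274) * 1000 + 375) (2*x) (3-2*x) (2*y) (3-2*y) 8 0 4 0.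
Proof. rewrite /Hpol /bt; ring. Qed.

Ltac cst_ge0 := repeat first [ apply: lexx | apply: ler01 | apply: ler0n | apply: addr_ge0 | apply: mulr_ge0 ].

Lemma Hpol_ge0 (R : realType) (x y : R) : 0 <= x <= 3/2 -> 0 <= y <= 3/2 -> 0 <= Hpol x y.
Proof.
move=> /andP[hx1 hx2] /andP[hy1 hy2].
have h1 : 0 <= 2 * x by lra.
have h2 : 0 <= 3 - 2 * x by lra.
have h3 : 0 <= 2 * y by lra.
have h4 : 0 <= 3 - 2 * y by lra.
have hK : (0 : R) < ((15 * 1000 + 116) * 1000 + 544).
  lra.
rewrite -(pmulr_rge0 _ hK) Hbern.
repeat first [ apply: addr_ge0 | apply: bt_ge0; [cst_ge0|done|done|done|done] ].
Qed.

Lemma qf3 (R : realType) (A B C D E G z w v : R) :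
  0 < G -> 0 < D * G - E ^+ 2 ->
  0 <= (A * G - C ^+ 2) * (D * G - E ^+ 2) - (B * G - C * E) ^+ 2 ->
  0 <= A * z ^+ 2 + 2 * B * z * w + 2 * C * z * v + D * w ^+ 2 + 2 * E * w * v + G * v ^+ 2.
Proof.
move=> hG hd hdet.
have id : G * (D * G - E ^+ 2) *
  (A * z ^+ 2 + 2 * B * z * w + 2 * C * z * v + D * w ^+ 2 + 2 * E * w * v + G * v ^+ 2)
  = (D * G - E ^+ 2) * (G * v + C * z + E * w) ^+ 2
    + ((D * G - E ^+ 2) * w + (B * G - C * E) * z) ^+ 2
    + ((A * G - C ^+ 2) * (D * G - E ^+ 2) - (B * G - C * E) ^+ 2) * z ^+ 2.
  by ring.
rewrite -(pmulr_rge0 _ (mulr_gt0 hG hd)) id.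
apply: addr_ge0; first apply: addr_ge0.
- exact: mulr_ge0 (ltW hd) (sqr_ge0 _).
- exact: sqr_ge0.
- exact: mulr_ge0 hdet (sqr_ge0 _).
Qed.

Lemma perk (R : realType) (x y z w v : R) : 0 < x <= 3/2 -> 0 < y <= 3/2 ->
  0 <= x * (2 * (z * (d0 x y * z + d1 x y * w + d2 x y * v)) - 1/50 * z ^+ 2
            - (15/8 * z ^+ 2 + 2 * (-3/5) * z * w + 1/2 * w ^+ 2))
       + (15/8 * w ^+ 2 + 2 * (-3/5) * w * v + 1/2 * v ^+ 2).
Proof.
move=> /andP[hx1 hx2] /andP[hy1 hy2].
have hL : 0 < (1 + x) * (1 + y) * (1 + y + x * y) by rewrite !mulr_gt0 //; nra.
have hdet : ((x * (2 * d0 x y - 1/50 - 15/8)) * (1/2) - (x * d2 x y) ^+ 2)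
              * ((15/8 - x/2) * (1/2) - (-3/5) ^+ 2)
            - ((x * (d1 x y + 3/5)) * (1/2) - (x * d2 x y) * (-3/5)) ^+ 2
          = x * (1/2) ^+ 2 * Hpol x y / (200 * 200 * ((1 + x) * (1 + y) * (1 + y + x * y)) ^+ 2).
  rewrite /Hpol /d0 /d1 /d2; field.
  by rewrite !gt_eqF //; nra.
have := @qf3 R (x * (2 * d0 x y - 1/50 - 15/8)) (x * (d1 x y + 3/5)) (x * d2 x y)
   (15/8 - x/2) (-3/5) (1/2) z w v.
have -> : x * (2 * (z * (d0 x y * z + d1 x y * w + d2 x y * v)) - 1/50 * z ^+ 2
            - (15/8 * z ^+ 2 + 2 * (-3/5) * z * w + 1/2 * w ^+ 2))
       + (15/8 * w ^+ 2 + 2 * (-3/5) * w * v + 1/2 * v ^+ 2) =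
   x * (2 * d0 x y - 1/50 - 15/8) * z ^+ 2 + 2 * (x * (d1 x y + 3/5)) * z * w
   + 2 * (x * d2 x y) * z * v + (15/8 - x/2) * w ^+ 2 + 2 * (-3/5) * w * v + 1/2 * v ^+ 2.
  by field.
apply; first lra.
  lra.
rewrite hdet; apply: divr_ge0.
  apply: mulr_ge0; first apply: mulr_ge0; [lra | apply: sqr_ge0 | apply: Hpol_ge0; lra].
apply: mulr_ge0; [lra | apply: sqr_ge0].
Qed.

Lemma perk2 (R : realType) (x y t z w v : R) : 0 < x <= 3/2 -> 0 < y <= 3/2 -> 0 < t ->
  x * t * (15/8 * z ^+ 2 + 2 * (-3/5) * z * w + 1/2 * w ^+ 2)
  - t * (15/8 * w ^+ 2 + 2 * (-3/5) * w * v + 1/2 * v ^+ 2)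
  <= 2 * (z * (x * t * (d0 x y * z + d1 x y * w + d2 x y * v))) - 1/50 * (x * t * z ^+ 2).
Proof.
move=> hx hy ht; rewrite -subr_ge0.
have hF := @perk R x y z w v hx hy.
have -> : 2 * (z * (x * t * (d0 x y * z + d1 x y * w + d2 x y * v))) - 1/50 * (x * t * z ^+ 2)
  - (x * t * (15/8 * z ^+ 2 + 2 * (-3/5) * z * w + 1/2 * w ^+ 2)
     - t * (15/8 * w ^+ 2 + 2 * (-3/5) * w * v + 1/2 * v ^+ 2))
  = t * (x * (2 * (z * (d0 x y * z + d1 x y * w + d2 x y * v)) - 1/50 * z ^+ 2
            - (15/8 * z ^+ 2 + 2 * (-3/5) * z * w + 1/2 * w ^+ 2))
       + (15/8 * w ^+ 2 + 2 * (-3/5) * w * v + 1/2 * v ^+ 2)).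
  by ring.
exact: mulr_ge0 (ltW ht) hF.
Qed.

Definition xz {R : realType} (xi : nat -> R) (j : nat) : R := if (3 <= j)%N then xi j else 0.

Lemma inner (R : realType) (tau : nat -> R) (xi : nat -> R) (k : nat) : (3 <= k)%N ->
  \sum_(3 <= j < k.+1) tau k * bdf3_kernel tau k (k - j) * xi j
  = tau k * (d0 (step_ratio tau k) (step_ratio tau k.-1) * xi k
           + d1 (step_ratio tau k) (step_ratio tau k.-1) * xz xi k.-1
           + d2 (step_ratio tau k) (step_ratio tau k.-1) * xz xi k.-2).
Proof.
case: k => [|[|[|[|[|m]]]]] // _.
- rewrite big_nat1 /bdf3_kernel subnn /xz /=; ring.
- rewrite big_nat_recr //= big_nat1 /bdf3_kernel /xz /=.
  ring.
- rewrite big_nat_recr //= big_nat_recr //= big_nat_recr //=.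
  rewrite big_nat_cond big1 ?add0r; last first.
    move=> j /andP[/andP[_ hj] _]; rewrite /bdf3_kernel.
    have -> : (m.+4.+1 - j = (m.+2 - j).+3)%N by lia.
    by rewrite /= mulr0 mul0r.
  have -> : (m.+4.+1 - m.+3 = 2)%N by lia.
  have -> : (m.+4.+1 - m.+4 = 1)%N by lia.
  rewrite subnn /bdf3_kernel /xz /=; ring.
Qed.

Lemma Re_lt (R : realType) (Re : R) : 0 < Re -> Re_fun Re = 0 -> Re < 3/2.
Proof.
move=> h0 h; rewrite ltNge; apply/negP => hge.
have hs : 61/50 <= Num.sqrt Re.
  have -> : (61/50 : R) = Num.sqrt ((61/50)^+2).
    rewrite sqrtr_sqr ger0_norm //; lra.
  apply: ler_wsqrtr; lra.
move: h; rewrite /Re_fun.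
set s := Num.sqrt Re => h.
have hd1 : 0 < 7 * (Re + 1) by lra.
have hd2 : 0 < Re ^+ 2 + Re + 1 by nra.
have : 10 * (Re ^+ 2 + Re + 1) = 7 * (Re + 1) * (Re ^+ 2 * s).
  move/eqP: h; rewrite subr_eq0 => /eqP h.
  have E1 : 10 * (Re ^+ 2 + Re + 1) = 10 / (7 * (Re + 1)) * (7 * (Re + 1)) * (Re ^+ 2 + Re + 1).
    by field; rewrite gt_eqF //; lra.
  have E2 : 7 * (Re + 1) * (Re ^+ 2 * s) = Re ^+ 2 * s / (Re ^+ 2 + Re + 1) * (7 * (Re + 1)) * (Re ^+ 2 + Re + 1).
    by field; rewrite gt_eqF.
  by rewrite E1 E2 h.
move=> e.
have hR2 : 9/4 <= Re ^+ 2 by nra.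
have h3 : 7 * (Re + 1) * (Re ^+ 2 * (61/50)) <= 7 * (Re + 1) * (Re ^+ 2 * s).
  by apply: ler_wpM2l; [lra | apply: ler_wpM2l => //; exact: sqr_ge0].
have h4 : 0 <= (Re - 3/2) ^+ 3 by apply: exprn_ge0; lra.
have h5 : 0 <= (Re - 3/2) ^+ 2 by apply: exprn_ge0; lra.
have h7 : (7 : R) * (Re + 1) * (Re ^+ 2 * (61/50)) - 10 * (Re ^+ 2 + Re + 1) =
  427/50 * (Re - 3/2) ^+ 3 + 3697/100 * (Re - 3/2) ^+ 2 + 8653/200 * (Re - 3/2) + 43/80.
  by field.
lra.
Qed.

Theorem lemma3p2 (R : realType) (Re : R)
  (HRe_pos : 0 < Re) (HRe_root : Re_fun Re = 0)
  (HRe_unique : forall x : R, 0 < x -> Re_fun x = 0 -> x = Re)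
  (tau : nat -> R)
  (Htau : forall k : nat, (1 <= k)%N -> 0 < tau k)
  (Hr : forall k : nat, (2 <= k)%N -> 0 < step_ratio tau k /\ step_ratio tau k < Re)
  (n : nat) (Hn : (3 <= n)%N) (xi : nat -> R) :
  2 * \sum_(3 <= k < n.+1) (xi k * \sum_(3 <= j < k.+1) tau k * bdf3_kernel tau k (k - j) * xi j)
  >= 1 / 50 * \sum_(3 <= k < n.+1) tau k * xi k ^+ 2.
Proof.
have hRe := @Re_lt R Re HRe_pos HRe_root.
pose Gf (k : nat) := tau k * (15/8 * xz xi k ^+ 2 + 2 * (-3/5) * xz xi k * xz xi k.-1
                              + 1/2 * xz xi k.-1 ^+ 2).
pose Inn (k : nat) := tau k * (d0 (step_ratio tau k) (step_ratio tau k.-1) * xi k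
           + d1 (step_ratio tau k) (step_ratio tau k.-1) * xz xi k.-1
           + d2 (step_ratio tau k) (step_ratio tau k.-1) * xz xi k.-2).
have claim : forall m : nat, Gf m.+2 <=
  2 * \sum_(3 <= k < m.+3) (xi k * Inn k)
  - 1 / 50 * \sum_(3 <= k < m.+3) tau k * xi k ^+ 2.
  elim=> [|m IH].
    rewrite !big_geq // /Gf /xz /=; lra.
  rewrite (big_nat_recr m.+3) //= (big_nat_recr m.+3) //=.
  have [hx1 hx2] := Hr m.+3 isT.
  have [hy1 hy2] := Hr m.+2 isT.
  have ht := Htau m.+2 isT.
  have htau : tau m.+3 = step_ratio tau m.+3 * tau m.+2.
    by rewrite /step_ratio /= divfK // gt_eqF.
  have hk := @perk2 R (step_ratio tau m.+3) (step_ratio tau m.+2) (tau m.+2)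
     (xi m.+3) (xz xi m.+2) (xz xi m.+1).
  have hxs : 0 < step_ratio tau m.+3 <= 3/2 by apply/andP; split; lra.
  have hys : 0 < step_ratio tau m.+2 <= 3/2 by apply/andP; split; lra.
  move: (hk hxs hys ht) IH.
  rewrite /Gf /Inn /= htau.
  set S1 := \sum_(3 <= k < m.+3) _.
  set S2 := \sum_(3 <= k < m.+3) _.
  move=> h1 h2.
  have -> : xz xi m.+3 = xi m.+3 by [].
  lra.
have eqS : \sum_(3 <= k < n.+1) (xi k * \sum_(3 <= j < k.+1) tau k * bdf3_kernel tau k (k - j) * xi j)
   = \sum_(3 <= k < n.+1) (xi k * Inn k).
  by apply: eq_big_nat => k /andP[hk _]; rewrite inner.
rewrite eqS.
have hG : 0 <= Gf n.
  rewrite /Gf; apply: mulr_ge0; first by apply/ltW/Htau; lia.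
  nra.
have := claim n.-2.
have -> : n.-2.+2 = n by lia.
lra.
Qed.
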